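(* Let $\boldsymbol{f}\in\mathbb{R}^E$ satisfy $\boldsymbol{u}^-_e<\boldsymbol{f}_e<\boldsymbol{u}^+_e$ for all $e$ and $\boldsymbol{c}^\top\boldsymbol{f}>F^*$. Let $\tilde{\boldsymbol{g}}\in\mathbb{R}^E$ satisfy $\|\mathbf{L}(\boldsymbol{f})^{-1}(\tilde{\boldsymbol{g}}-\boldsymbol{g}(\boldsymbol{f}))\|_\infty\le\kappa/8$ for some $\kappa\in(0,1)$, and $\tilde{\boldsymbol{\ell}}\in\mathbb{R}^E_{>0}$ satisfy $\tilde{\boldsymbol{\ell}}\approx_2\boldsymbol{\ell}(\boldsymbol{f})$. Let $\boldsymbol{\Delta}$ satisfy $\mathbf{B}^\top\boldsymbol{\Delta}=0$ and $\tilde{\boldsymbol{g}}^\top\boldsymbol{\Delta}/\|\tilde{\mathbf{L}}\boldsymbol{\Delta}\|_1\le-\kappa$, and let $\eta$ satisfy $\eta\,\tilde{\boldsymbol{g}}^\top\boldsymbol{\Delta}=-\kappa^2/50$. Then $\Phi(\boldsymbol{f}+\eta\boldsymbol{\Delta})\le\Phi(\boldsymbol{f})-\kappa^2/500$.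
   Context: Setting: $G=(V,E)$ is a directed graph with $m=|E|$ edges and edge-vertex incidence matrix $\mathbf{B}$ (row of edge $(a,b)$ has $+1$ at $a$, $-1$ at $b$); demands $\boldsymbol{d}\in\mathbb{Z}^V$, lower/upper capacities $\boldsymbol{u}^-,\boldsymbol{u}^+\in\mathbb{Z}^E$, and costs $\boldsymbol{c}\in\mathbb{Z}^E$ are integers bounded in absolute value by $U$. $F^*=\min\{\boldsymbol{c}^\top\boldsymbol{f}:\mathbf{B}^\top\boldsymbol{f}=\boldsymbol{d},\ \boldsymbol{u}^-\le\boldsymbol{f}\le\boldsymbol{u}^+\}$. Let $\alpha=1/(1000\log(mU))$ and $\Phi(\boldsymbol{f})=20m\log(\boldsymbol{c}^\top\boldsymbol{f}-F^* )+\sum_{e\in E}\big((\boldsymbol{u}^+_e-\boldsymbol{f}_e)^{-\alpha}+(\boldsymbol{f}_e-\boldsymbol{u}^-_e)^{-\alpha}\big)$. Lengths: $\boldsymbol{\ell}(\boldsymbol{f})_e=(\boldsymbol{u}^+_e-\boldsymbol{f}_e)^{-1-\alpha}+(\boldsymbol{f}_e-\boldsymbol{u}^-_e)^{-1-\alpha}$; gradients $\boldsymbol{g}(\boldsymbol{f})=\nabla\Phi(\boldsymbol{f})$, i.e. $\boldsymbol{g}(\boldsymbol{f})_e=20m(\boldsymbol{c}^\top\boldsymbol{f}-F^* )^{-1}\boldsymbol{c}_e+\alpha(\boldsymbol{u}^+_e-\boldsymbol{f}_e)^{-1-\alpha}-\alpha(\boldsymbol{f}_e-\boldsymbol{u}^-_e)^{-1-\alpha}$.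 $\mathbf{L}(\boldsymbol{f})=\mathrm{diag}(\boldsymbol{\ell}(\boldsymbol{f}))$, $\tilde{\mathbf{L}}=\mathrm{diag}(\tilde{\boldsymbol{\ell}})$. For positive vectors, $\boldsymbol{x}\approx_\beta\boldsymbol{y}$ means $\beta^{-1}\boldsymbol{y}_i\le\boldsymbol{x}_i\le\beta\boldsymbol{y}_i$ for all $i$. *)

(* Defs.v *)
From mathcomp Require Import all_boot all_order all_algebra.
From mathcomp Require Import all_classical all_reals all_analysis.
Set Implicit Arguments. Unset Strict Implicit. Unset Printing Implicit Defensive.
Import Order.TTheory GRing.Theory Num.Theory.
Local Open Scope ring_scope.

Section Defs.
Variable R : realType.
Variables (V : finType) (m : nat).
Variables (src dst : 'I_m -> V).

(* Edge-vertex incidence matrix B: row of edge (a,b) has +1 at a, -1 at b. *)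
Definition incB (e : 'I_m) (v : V) : R := (src e == v)%:R - (dst e == v)%:R.

Definition BT (x : 'I_m -> R) (v : V) : R := \sum_(e < m) incB e v * x e.

Definition dotE (x y : 'I_m -> R) : R := \sum_(e < m) x e * y e.

Definition norm1 (x : 'I_m -> R) : R := \sum_(e < m) `|x e|.
Definition norminf (x : 'I_m -> R) : R := \big[Num.max/0]_(e < m) `|x e|.

Definition feasible (d : V -> R) (um up f : 'I_m -> R) : Prop :=
  (forall v, BT f v = d v) /\ (forall e, um e <= f e <= up e).

Definition is_min_cost (d : V -> R) (um up c : 'I_m -> R) (Fstar : R) : Prop :=
  (exists f0, feasible d um up f0 /\ dotE c f0 = Fstar) /\
  (forall f, feasible d um up f -> Fstar <= dotE c f).

Definition alpha (U : nat) : R := 1 / (1000 * ln ((m * U)%:R)).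

Definition Phi (U : nat) (Fstar : R) (um up c f : 'I_m -> R) : R :=
  20 * m%:R * ln (dotE c f - Fstar)
  + \sum_(e < m) (powR (up e - f e) (- alpha U) + powR (f e - um e) (- alpha U)).

Definition ell (U : nat) (um up f : 'I_m -> R) (e : 'I_m) : R :=
  powR (up e - f e) (-1 - alpha U) + powR (f e - um e) (-1 - alpha U).

Definition grad (U : nat) (Fstar : R) (um up c f : 'I_m -> R) (e : 'I_m) : R :=
  20 * m%:R * (dotE c f - Fstar)^-1 * c e
  + alpha U * powR (up e - f e) (-1 - alpha U)
  - alpha U * powR (f e - um e) (-1 - alpha U).

End Defs.

(* Main.v *)
Require Import Defs.
From mathcomp Require Import all_boot all_order all_algebra.
From mathcomp Require Import all_classical all_reals all_analysis.
From mathcomp Require Import ring lra.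
Import Order.TTheory GRing.Theory Num.Theory.
Local Open Scope ring_scope.

Section S.
Variable R : realType.

Lemma ln_bounds (r : R) : `|r| <= 1/2 ->
  ln (1 + r) <= r /\ r <= ln (1 + r) * (1 + r).
Proof.
move=> hr.
have hr1 : -1 < r by move: hr; rewrite ler_norml; lra.
have hp : 0 < 1 + r by lra.
split; first exact: le_ln1Dx.
have h1 : ln (1 + ((1 + r)^-1 - 1)) <= (1 + r)^-1 - 1.
  apply: le_ln1Dx. have : 0 < (1 + r)^-1 by rewrite invr_gt0. lra.
have e1 : 1 + ((1 + r)^-1 - 1) = (1 + r)^-1 by ring.
rewrite e1 lnV ?posrE // in h1.
have e2 : (1 + r)^-1 * (1 + r) = 1 by rewrite mulVf // gt_eqF.
nra.
Qed.

Lemma expR_step (b r : R) : 0 < b <= 1/8 -> `|r| <= 1/2 ->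
  expR (- (b * ln (1 + r))) <= 1 - b * r + 3 * b * r ^+ 2.
Proof.
move=> /andP[hb0 hb1] hr.
have [hL1 hL2] := @ln_bounds r hr.
set L := ln (1 + r) in hL1 hL2 *.
have hr' : -(1/2) <= r <= 1/2 by rewrite -ler_norml.
case/andP: hr' => hra hrb.
have hLa : L <= `|r| by move: hL1; case: (ger0P r) => hs; lra.
have hLb : - (2 * `|r|) <= L.
  case: (ger0P r) => hs; nra.
set y := b * L.
have hy : `|y| <= 1/8.
  have hL : `|L| <= 1 by rewrite ler_norml; lra.
  rewrite normrM (gtr0_norm hb0); have := normr_ge0 L; nra.
have hy' : -(1/8) <= y <= 1/8 by rewrite -ler_norml.
case/andP: hy' => hya hyb.
set E := expR (- y).
have hE0 : 0 <= E by apply: expR_ge0.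
have hE1 : E * expR y = 1 by rewrite /E mulrC expRxMexpNx_1.
have hE2 : 1 + y <= expR y := expR_ge1Dx y.
have hE3 : E * (1 + y) <= 1 by have := ler_wpM2l hE0 hE2; rewrite hE1.
have hE4 : E <= 1 - y + 2 * y ^+ 2.
  have hy1 : 0 < 1 + y by lra.
  rewrite -(ler_pM2r hy1).
  have : 1 <= (1 - y + 2 * y ^+ 2) * (1 + y).
    have -> : (1 - y + 2 * y ^+ 2) * (1 + y) = 1 + y ^+ 2 * (1 + 2 * y) by ring.
    have : 0 <= y ^+ 2 * (1 + 2 * y) by apply: mulr_ge0; [exact: sqr_ge0 | lra].
    lra.
  lra.
have hL3 : r - 2 * r ^+ 2 <= L by nra.
have hL4 : L ^+ 2 <= 4 * r ^+ 2.
  have h : 0 <= (2 * `|r| - L) * (2 * `|r| + L) by apply: mulr_ge0; lra.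
  have : `|r| ^+ 2 = r ^+ 2 by rewrite real_normK ?num_real.
  nra.
rewrite /y in hE4; nra.
Qed.

Lemma powR_pos (s x : R) : 0 < s -> powR s x = expR (x * ln s).
Proof. by move=> hs; rewrite /powR gt_eqF. Qed.

Lemma barrier_step (b s t : R) : 0 < b <= 1/8 -> 0 < s -> powR s b <= 2 ->
  `|t| * powR s (-1 - b) <= 1/4 ->
  powR (s + t) (- b) <= powR s (- b) - b * powR s (-1 - b) * t
                         + 6 * b * (powR s (-1 - b) * t) ^+ 2.
Proof.
move=> hb hs hw ht.
have hb' := hb; case/andP: hb' => hb0 hb1.
rewrite !(@powR_pos s _ hs) in hw ht *.
set ls := ln s in hw ht *.
set p := expR ((-1 - b) * ls) in ht *.
set q := expR (- b * ls).
set w := expR (b * ls) in hw.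
have hsl : expR ls = s by rewrite /ls lnK.
have hq : q = s * p by rewrite /q /p -hsl -expRD; congr expR; ring.
have hpw : p * w * s = 1.
  by rewrite /p /w -hsl -!expRD -[RHS]expR0; congr expR; ring.
have hp0 : 0 < p by apply: expR_gt0.
have hw0 : 0 < w by apply: expR_gt0.
set r := t / s.
have hr : r = t * (p * w).
  have -> : p * w = (p * w * s) / s by rewrite mulfK ?gt_eqF.
  by rewrite hpw mul1r.
have hrn : `|r| <= 1/2.
  rewrite hr normrM (gtr0_norm (mulr_gt0 hp0 hw0)).
  have : 0 <= `|t| * p by rewrite mulr_ge0 ?normr_ge0 ?ltW.
  nra.
have hst : s + t = s * (1 + r).
  by rewrite /r mulrDr mulr1 mulrCA mulfV ?gt_eqF ?mulr1.
have h1r : 0 < 1 + r by move: hrn; rewrite ler_norml; lra.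
rewrite powR_pos; last by rewrite hst mulr_gt0.
have -> : ln (s + t) = ls + ln (1 + r) by rewrite hst lnM ?posrE.
have -> : expR (- b * (ls + ln (1 + r))) = q * expR (- (b * ln (1 + r))).
  by rewrite /q -expRD; congr expR; ring.
have hq0 : 0 <= q by apply: expR_ge0.
apply: le_trans (ler_wpM2l hq0 (@expR_step b r hb hrn)) _.
have hqw : q * w = 1 by rewrite hq -hpw; ring.
have e : q * (1 - b * r + 3 * b * r ^+ 2) = q - b * p * t + 3 * b * (p * t) ^+ 2 * w.
  rewrite hr.
  have -> : q * (1 - b * (t * (p * w)) + 3 * b * (t * (p * w)) ^+ 2)
     = q - b * t * p * (q * w) + 3 * b * (p * t) ^+ 2 * w * (q * w).
    ring.
  rewrite hqw; ring.
rewrite e.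
have hX : 0 <= b * (p * t) ^+ 2 by apply: mulr_ge0; [lra | apply: sqr_ge0].
have : 0 <= (2 - w) * (b * (p * t) ^+ 2) by apply: mulr_ge0; lra.
lra.
Qed.
End S.

Theorem lemma4p4 (R : realType) (V : finType) (m : nat) (src dst : 'I_m -> V)
  (U : nat) (d : V -> int) (um up c : 'I_m -> int)
  (hU : (1 < m * U)%N)
  (hd : forall v, `|d v| <= U%:Z) (hum : forall e, `|um e| <= U%:Z)
  (hup : forall e, `|up e| <= U%:Z) (hc : forall e, `|c e| <= U%:Z)
  (Fstar : R)
  (hF : is_min_cost src dst (fun v => (d v)%:~R) (fun e => (um e)%:~R)
          (fun e => (up e)%:~R) (fun e => (c e)%:~R) Fstar)
  (f : 'I_m -> R)
  (hf : forall e, (um e)%:~R < f e < (up e)%:~R)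
  (hgap : Fstar < dotE (fun e => (c e)%:~R) f)
  (kappa : R) (hk : 0 < kappa < 1)
  (gt : 'I_m -> R)
  (hgt : norminf (fun e =>
            (ell U (fun e => (um e)%:~R) (fun e => (up e)%:~R) f e)^-1 *
            (gt e - grad U Fstar (fun e => (um e)%:~R) (fun e => (up e)%:~R)
                      (fun e => (c e)%:~R) f e)) <= kappa / 8)
  (lt : 'I_m -> R) (hlt0 : forall e, 0 < lt e)
  (hlt : forall e,
     2^-1 * ell U (fun e => (um e)%:~R) (fun e => (up e)%:~R) f e <= lt e /\
     lt e <= 2 * ell U (fun e => (um e)%:~R) (fun e => (up e)%:~R) f e)
  (Delta : 'I_m -> R) (hcirc : forall v, BT src dst Delta v = 0)
  (hratio : dotE gt Delta / norm1 (fun e => lt e * Delta e) <= - kappa)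
  (eta : R) (heta : eta * dotE gt Delta = - (kappa ^+ 2 / 50)) :
  Phi U Fstar (fun e => (um e)%:~R) (fun e => (up e)%:~R) (fun e => (c e)%:~R)
      (fun e => f e + eta * Delta e)
  <= Phi U Fstar (fun e => (um e)%:~R) (fun e => (up e)%:~R) (fun e => (c e)%:~R) f
     - kappa ^+ 2 / 500.
Proof.
have hm : (0 < m)%N.
  by case: (posnP m) hU => [-> | //]; rewrite mul0n.
have hm1 : 1 <= m%:R :> R by rewrite (ler_nat R 1).
case/andP: hk => hk0 hk1.
set β := alpha R m U.
set X : R := (m * U)%:R.
have hX2 : 2 <= X by rewrite /X (ler_nat R 2).
have hUX : U%:R <= X by rewrite /X ler_nat leq_pmull.
have hU0 : 0 <= U%:R :> R by [].
have hln2 : 1/2 <= ln (2 : R).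
  have h := @le_ln1Dx R (-(1/2)) ltac:(lra).
  have e : 1 + - (1/2) = (2 : R)^-1 by field.
  rewrite e lnV ?posrE // in h; lra.
have hlnX : 1/2 <= ln X.
  apply: le_trans hln2 _; rewrite ler_ln ?posrE //; lra.
have hβe : β = 1 / (1000 * ln X) by [].
have hlnX0 : 0 < 1000 * ln X by clear -hlnX; apply: mulr_gt0; lra.
have hβ0 : 0 < β by clear -hlnX0 hβe; rewrite hβe; apply: divr_gt0; [lra | exact: hlnX0].
have hβl : β * (2 * ln X) = 1/500.
  clear -hlnX hβe; rewrite hβe; field; apply: lt0r_neq0; lra.
have hβ1 : β <= 1/8.
  have hh : β * (1/2) <= β * ln X by rewrite ler_pM2l.
  clear -hh hβl; lra.
have hexp : forall y : R, y <= 1/2 -> expR y <= 2.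
  move=> y hy.
  have h1 := expR_ge1Dx (- y).
  have h2 : expR y * expR (- y) = 1 := expRxMexpNx_1 y.
  have h3 := expR_ge0 y.
  clear -hy h1 h2 h3; nra.
have hw : forall s, 0 < s -> s <= 2 * U%:R -> powR s β <= 2.
  move=> s hs hs2.
  rewrite powR_pos; last exact: hs.
  apply: hexp.
  have hXX : s <= X * X by clear -hs2 hX2 hUX hU0; nra.
  have hX0 : 0 < X * X by clear -hX2; apply: mulr_gt0; lra.
  have hl : ln s <= ln (X * X) by rewrite ler_ln ?posrE ?hs ?hX0.
  rewrite lnM ?posrE in hl; try (clear -hX2; lra).
  have hh : β * ln s <= β * (ln X + ln X) by rewrite ler_pM2l.
  clear -hh hβl; lra.
have hUp : forall e, (up e)%:~R <= U%:R :> R.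
  move=> e; rewrite -[U%:R]/((U%:Z)%:~R : R) ler_int.
  exact: le_trans (ler_norm _) (hup e).
have hUm : forall e, - U%:R <= (um e)%:~R :> R.
  move=> e; rewrite -[U%:R]/((U%:Z)%:~R : R) -mulrNz ler_int.
  by move: (hum e); rewrite ler_norml => /andP[].
pose a e := (up e)%:~R - f e.
pose bb e := f e - (um e)%:~R.
pose A e := powR (a e) (-1 - β).
pose B e := powR (bb e) (-1 - β).
have ha0 : forall e, 0 < a e by move=> e; rewrite /a; case/andP: (hf e) => _ h; clear -h; lra.
have hb0 : forall e, 0 < bb e by move=> e; rewrite /bb; case/andP: (hf e) => h _; clear -h; lra.
have ha2 : forall e, a e <= 2 * U%:R.
  by move=> e; rewrite /a; case/andP: (hf e) => h1 h2; have h3 := hUp e; have h4 := hUm e; clear -h1 h2 h3 h4; lra.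
have hb2 : forall e, bb e <= 2 * U%:R.
  by move=> e; rewrite /bb; case/andP: (hf e) => h1 h2; have h3 := hUp e; have h4 := hUm e; clear -h1 h2 h3 h4; lra.
have hA0 : forall e, 0 <= A e by move=> e; apply: powR_ge0.
have hB0 : forall e, 0 <= B e by move=> e; apply: powR_ge0.
have hell : forall e, ell U (fun e => (um e)%:~R) (fun e => (up e)%:~R) f e = A e + B e.
  by [].
set D := dotE gt Delta in hratio heta.
set N := norm1 (fun e => lt e * Delta e) in hratio.
have hN0 : 0 <= N by apply: sumr_ge0 => e _; apply: normr_ge0.
have hNp : 0 < N.
  rewrite lt_neqAle hN0 andbT; apply/eqP => hN.
  by move: hratio; rewrite -hN invr0 mulr0; clear -hk0; lra.
have hD : D <= - kappa * N by rewrite -ler_pdivrMr.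
have hkN : 0 < kappa * N by apply: mulr_gt0.
have hDn : D < 0 by clear -hD hkN; lra.
have hk2 : 0 < kappa ^+ 2 by apply: exprn_gt0.
have heta0 : 0 < eta by clear -heta hDn hk2; nra.
have hetaN : eta * N <= kappa / 50.
  have hh : eta * N * kappa <= eta * (- D) by clear -heta0 hD hNp hk0; nra.
  clear -hh heta hk0; nra.
pose dl e := eta * Delta e.
set M := \sum_(e < m) (A e + B e) * `|dl e|.
have hM0 : 0 <= M.
  by apply: sumr_ge0 => e _; apply: mulr_ge0; [apply: addr_ge0 | apply: normr_ge0].
have hM : M <= kappa / 25.
  have : M <= \sum_(e < m) (2 * eta) * `|lt e * Delta e|.
    apply: ler_sum => e _.
    rewrite /dl normrM (gtr0_norm heta0) normrM (gtr0_norm (hlt0 e)).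
    have := (hlt e).1; rewrite hell => h.
    have h2 := normr_ge0 (Delta e).
    have h3 : 0 <= eta * `|Delta e| * (lt e - 2^-1 * (A e + B e)).
      by apply: mulr_ge0; [apply: mulr_ge0; [apply: ltW|] | rewrite subr_ge0].
    clear -h3; lra.
  have eN : \sum_(e < m) `|lt e * Delta e| = N by [].
  rewrite -mulr_sumr eN => hh.
  clear -hh hetaN; lra.
have hterm : forall e, (A e + B e) * `|dl e| <= M.
  move=> e; rewrite /M (bigD1 e) //= lerDl.
  by apply: sumr_ge0 => i _; apply: mulr_ge0; [apply: addr_ge0 | apply: normr_ge0].
have hβb : 0 < β <= 1/8 by rewrite hβ0 hβ1.
have hbar : forall e, powR (a e - dl e) (- β) + powR (bb e + dl e) (- β)
    <= powR (a e) (- β) + powR (bb e) (- β) + β * (A e - B e) * dl e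
       + 6 * β * M * ((A e + B e) * `|dl e|).
  move=> e.
  have hT := hterm e.
  have hdA : `|- dl e| * A e <= 1/4.
    rewrite normrN; have h1 := mulr_ge0 (hB0 e) (normr_ge0 (dl e)).
    clear -h1 hT hM hk1; lra.
  have hdB : `|dl e| * B e <= 1/4.
    have h1 := mulr_ge0 (hA0 e) (normr_ge0 (dl e)).
    clear -h1 hT hM hk1; lra.
  have h1 := @barrier_step R β (a e) (- dl e) hβb (ha0 e) (hw _ (ha0 e) (ha2 e)) hdA.
  have h2 := @barrier_step R β (bb e) (dl e) hβb (hb0 e) (hw _ (hb0 e) (hb2 e)) hdB.
  rewrite -/(A e) in h1; rewrite -/(B e) in h2.
  have hsq : (A e * - dl e) ^+ 2 + (B e * dl e) ^+ 2
      <= ((A e + B e) * `|dl e|) * M.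
    have hn : `|dl e| ^+ 2 = dl e ^+ 2 by rewrite real_normK ?num_real.
    have hn0 := normr_ge0 (dl e).
    have hA := hA0 e; have hB := hB0 e.
    have h0 : 0 <= (A e + B e) * `|dl e| by apply: mulr_ge0; [apply: addr_ge0|].
    have hh1 : ((A e + B e) * `|dl e|) * ((A e + B e) * `|dl e|)
        <= ((A e + B e) * `|dl e|) * M by rewrite ler_wpM2l.
    have hh2 : (A e * - dl e) ^+ 2 + (B e * dl e) ^+ 2
        <= ((A e + B e) * `|dl e|) * ((A e + B e) * `|dl e|).
      have -> : (A e * - dl e) ^+ 2 + (B e * dl e) ^+ 2
          = (A e ^+ 2 + B e ^+ 2) * `|dl e| ^+ 2 by rewrite hn; ring.
      have -> : ((A e + B e) * `|dl e|) * ((A e + B e) * `|dl e|)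
          = (A e ^+ 2 + B e ^+ 2) * `|dl e| ^+ 2 + 2 * (A e * B e) * `|dl e| ^+ 2 by ring.
      have hh3 : 0 <= 2 * (A e * B e) * `|dl e| ^+ 2.
        by apply: mulr_ge0; [apply: mulr_ge0; [done | apply: mulr_ge0] | apply: sqr_ge0].
      clear -hh3; lra.
    clear -hh1 hh2; lra.
  have e1 : a e + - dl e = a e - dl e by [].
  rewrite e1 in h1.
  have h6 : 0 <= 6 * β by clear -hβ0; lra.
  have h7 := ler_wpM2l h6 hsq.
  clear -h1 h2 h7; lra.
have hAp : forall e, 0 < A e.
  by move=> e; rewrite /A (@powR_pos R (a e) _ (ha0 e)) expR_gt0.
have hABp : forall e, 0 < A e + B e.
  by move=> e; apply: ltr_wpDr; [apply: hB0 | apply: hAp].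
rewrite /norminf in hgt.
have hg : forall e, `|gt e - grad U Fstar (fun e => (um e)%:~R) (fun e => (up e)%:~R)
                      (fun e => (c e)%:~R) f e| <= kappa / 8 * (A e + B e).
  move=> e.
  have h := le_trans (le_bigmax _ _ e) hgt.
  rewrite /= hell normrM normfV (gtr0_norm (hABp e)) mulrC in h.
  by rewrite ler_pdivrMr in h; [exact: h | exact: hABp e].
set G := dotE (fun e => (c e)%:~R) f - Fstar.
have hG : 0 < G by rewrite /G; clear -hgap; lra.
set K := 20 * m%:R * G^-1.
set h := \sum_(e < m) (c e)%:~R * dl e.
have hgrad : forall e, grad U Fstar (fun e => (um e)%:~R) (fun e => (up e)%:~R)
                      (fun e => (c e)%:~R) f e = K * (c e)%:~R + β * A e - β * B e.
  by [].
have hedge : forall e, powR (a e - dl e) (- β) + powR (bb e + dl e) (- β)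
    <= (powR (a e) (- β) + powR (bb e) (- β)) + gt e * dl e
       + (kappa / 8 + 6 * β * M) * ((A e + B e) * `|dl e|) - K * ((c e)%:~R * dl e).
  move=> e.
  have h1 := hbar e.
  have h2 := hg e.
  move: h1 h2; rewrite hgrad.
  set gr := K * (c e)%:~R + β * A e - β * B e.
  move=> h1 h2.
  have h3 : (gr - gt e) * dl e <= `|gt e - gr| * `|dl e|.
    by rewrite distrC -normrM; apply: ler_norm.
  have h4 : `|gt e - gr| * `|dl e| <= kappa / 8 * (A e + B e) * `|dl e|.
    by apply: ler_wpM2r => //; apply: normr_ge0.
  have h5 : β * (A e - B e) * dl e = gr * dl e - K * ((c e)%:~R * dl e).
    by rewrite /gr; ring.
  clear -h1 h3 h4 h5; lra.
have hlow : forall e, gt e * dl e - (kappa / 8 + β) * ((A e + B e) * `|dl e|)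
    <= K * ((c e)%:~R * dl e).
  move=> e.
  have h2 := hg e.
  move: h2; rewrite hgrad.
  set gr := K * (c e)%:~R + β * A e - β * B e.
  move=> h2.
  have h3 : (gt e - gr) * dl e <= `|gt e - gr| * `|dl e|.
    by rewrite -normrM; apply: ler_norm.
  have h4 : `|gt e - gr| * `|dl e| <= kappa / 8 * (A e + B e) * `|dl e|.
    by apply: ler_wpM2r => //; apply: normr_ge0.
  have h6 : (A e - B e) * dl e <= (A e + B e) * `|dl e|.
    apply: le_trans (ler_norm _) _; rewrite normrM ler_wpM2r ?normr_ge0 //.
    apply: le_trans (ler_normB _ _) _.
    by rewrite (ger0_norm (hA0 e)) (ger0_norm (hB0 e)).
  have h7 : β * ((A e - B e) * dl e) <= β * ((A e + B e) * `|dl e|).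
    by rewrite ler_pM2l.
  have h5 : K * ((c e)%:~R * dl e) = gr * dl e - β * ((A e - B e) * dl e).
    by rewrite /gr; ring.
  clear -h3 h4 h5 h7; lra.
have eGD : \sum_(e < m) gt e * dl e = eta * D.
  by rewrite /D /dotE mulr_sumr; apply: eq_bigr => e _; rewrite /dl; ring.
have eh : \sum_(e < m) K * ((c e)%:~R * dl e) = K * h by rewrite /h mulr_sumr.
have hsumU : \sum_(e < m) (powR (a e - dl e) (- β) + powR (bb e + dl e) (- β))
    <= \sum_(e < m) (powR (a e) (- β) + powR (bb e) (- β)) + eta * D
       + (kappa / 8 + 6 * β * M) * M - K * h.
  apply: le_trans (ler_sum _ (fun e _ => hedge e)) _.
  rewrite sumrB !big_split /= eGD eh -mulr_sumr.
  by [].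
have hsumL : eta * D - (kappa / 8 + β) * M <= K * h.
  rewrite -eh -eGD /M mulr_sumr -sumrB.
  by apply: ler_sum => e _; apply: hlow.
have hetaD : eta * D = - (kappa ^+ 2 / 50) by exact: heta.
have hKh : - (1/2) <= K * h.
  have hq : (kappa / 8 + β) * M <= (1/4) * (1/25).
    apply: le_trans (ler_wpM2r hM0 (_ : kappa / 8 + β <= 1/4)) _.
      by clear -hk1 hβ1; lra.
    by apply: ler_wpM2l; [lra | clear -hM hk1; lra].
  have hk2' : kappa ^+ 2 <= 1.
    by rewrite expr2; clear -hk0 hk1; nra.
  clear -hsumL hetaD hq hk2'; lra.
have hGh : 0 < G + h.
  have hKG : K * h * G = 20 * m%:R * h by rewrite /K; field; apply: lt0r_neq0.
  have h1 : - (1/2) * G <= K * h * G by rewrite ler_pM2r.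
  rewrite hKG in h1.
  clear -h1 hm1 hG; nra.
have hlog : 20 * m%:R * ln (G + h) <= 20 * m%:R * ln G + K * h.
  have hr : -1 < h / G.
    rewrite ltr_pdivlMr //; clear -hGh; lra.
  have e1 : G + h = G * (1 + h / G) by field; apply: lt0r_neq0.
  rewrite e1 lnM ?posrE //; last by clear -hr; lra.
  have hl := le_ln1Dx hr.
  have hm0 : 0 <= 20 * m%:R :> R by clear -hm1; lra.
  have := ler_wpM2l hm0 hl.
  have eK : 20 * m%:R * (h / G) = K * h by rewrite /K; ring.
  rewrite eK => hh.
  clear -hh; lra.
have key : Phi U Fstar (fun e => (um e)%:~R) (fun e => (up e)%:~R) (fun e => (c e)%:~R)
      (fun e => f e + eta * Delta e)
    = 20 * m%:R * ln (G + h)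
      + \sum_(e < m) (powR (a e - dl e) (- β) + powR (bb e + dl e) (- β)).
  rewrite /Phi; congr (_ + _).
    congr (_ * ln _); rewrite /G /h /dotE /dl.
    have -> : \sum_(e < m) (c e)%:~R * (f e + eta * Delta e)
        = \sum_(e < m) (c e)%:~R * f e + \sum_(e < m) (c e)%:~R * (eta * Delta e).
      by rewrite -big_split; apply: eq_bigr => e _ /=; ring.
    ring.
  apply: eq_bigr => e _; rewrite /a /bb /dl /β.
  congr (powR _ _ + powR _ _); ring.
have keyo : Phi U Fstar (fun e => (um e)%:~R) (fun e => (up e)%:~R) (fun e => (c e)%:~R) f
    = 20 * m%:R * ln G
      + \sum_(e < m) (powR (a e) (- β) + powR (bb e) (- β)) by [].
rewrite key keyo.
have hfin : kappa * M <= kappa * (kappa / 25) by rewrite ler_pM2l.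
have hMM : M * M <= (kappa / 25) * (kappa / 25).
  by apply: ler_pM => //.
have hbMM : β * (M * M) <= (1/8) * (M * M).
  by apply: ler_wpM2r => //; apply: mulr_ge0.
have hk2e : kappa ^+ 2 = kappa * kappa by rewrite expr2.
clear -hlog hsumU hetaD hfin hMM hbMM hk2e hM0 hk0.
nra.
Qed.
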